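(* Let $S_f=\{f_i\ge0: i=1,\ldots,m\}$ be an inequality set in $\mathbf{x}=(x_1,\ldots,x_n)$. Let $I\subseteq\{1,\ldots,m\}$ be the set of indices $k$ such that $f_k=0$ is an implied equality of $S_f$, let $E=\{f_k=0: k\in I\}$, and let $\widetilde{E}=\{x_{k_i}-U_i=0: i=1,\ldots,\tilde n\}$ be the Gauss–Jordan reduced form of $E$ with respect to the variable order $x_1\prec\cdots\prec x_n$. Let $R_f$ be the set of nonzero polynomials among those obtained from $f_j$, $j\in\{1,\ldots,m\}\setminus I$, by substituting $U_i$ for $x_{k_i}$ for every $i=1,\ldots,\tilde n$. Then the inequality set $\{g\ge 0: g\in R_f\}$ is a pure inequality set.
   Context: An inequality set is a finite set $S=\{f_i\ge 0: i=1,\ldots,m\}$ with each $f_i$ a nonzero homogeneous linear polynomial in $\mathbf{x}$ with real coefficients; its solutions are the points of $\mathbb{R}^n$ satisfying all inequalities. The equality $f_k=0$ is an implied equality of $S$ if $f_k(\mathbf{x})=0$ for every solution $\mathbf{x}$ of $S$; $S$ is pure if it has no implied equalities. For a finite system $E$ of homogeneous linear equations in $\mathbf{x}$ of rank $\tilde n$, its Gauss–Jordan reduced form (reduced row echelon form) with respect to the order $x_1\prec\cdots\prec x_n$ is the unique equivalent system $\{x_{k_i}-U_i=0: i=1,\ldots,\tilde n\}$ with $k_1<\cdots<k_{\tilde n}$, where each $U_i$ is a real linear combination of the non-pivot variables $x_j$, $j\notin\{k_1,\ldots,k_{\tilde n}\}$, $j>k_i$. *)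

(* Defs.v *)
From HB Require Import structures.
From mathcomp Require Import all_boot all_order all_algebra.
From mathcomp Require Import reals.
Set Implicit Arguments. Unset Strict Implicit. Unset Printing Implicit Defensive.
Import Order.TTheory GRing.Theory Num.Theory.
Local Open Scope ring_scope.

(* A homogeneous linear polynomial c_1 x_1 + ... + c_n x_n is represented by
   its coefficient row vector c : 'rV[R]_n; points of R^n are row vectors. *)
Definition lf (R : realType) (n : nat) (c x : 'rV[R]_n) : R :=
  \sum_(j < n) c 0 j * x 0 j.

Definition is_solution (R : realType) (n : nat) (S : 'rV[R]_n -> Prop)
  (x : 'rV[R]_n) : Prop := forall g, S g -> 0 <= lf g x.

Definition implied_eq (R : realType) (n : nat) (S : 'rV[R]_n -> Prop)
  (g : 'rV[R]_n) : Prop := forall x, is_solution S x -> lf g x = 0.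

Definition pure (R : realType) (n : nat) (S : 'rV[R]_n -> Prop) : Prop :=
  forall g, S g -> ~ implied_eq S g.

(* The system {x_{k_i} - U_i = 0 : i < nt} (U_i given by its coefficient
   vector) is the Gauss-Jordan reduced form of the homogeneous system
   {e = 0 : E e} w.r.t. x_1 < ... < x_n:
   - pivots strictly increasing,
   - U_i only involves non-pivot variables x_j with j > k_i,
   - the system is equivalent to E (same solution set). *)
Definition is_gj_form (R : realType) (n : nat) (E : 'rV[R]_n -> Prop)
  (nt : nat) (k : 'I_nt -> 'I_n) (U : 'I_nt -> 'rV[R]_n) : Prop :=
  [/\ (forall i j : 'I_nt, (i < j)%N -> (k i < k j)%N),
      (forall (i : 'I_nt) (j : 'I_n),
          ((exists l, j = k l) \/ (j <= k i)%N) -> U i 0 j = 0) &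
      (forall x : 'rV[R]_n,
          (forall e, E e -> lf e x = 0) <->
          (forall i : 'I_nt, x 0 (k i) = lf (U i) x))].

Definition subst_gj (R : realType) (n nt : nat) (k : 'I_nt -> 'I_n)
  (U : 'I_nt -> 'rV[R]_n) (f : 'rV[R]_n) : 'rV[R]_n :=
  \row_(j < n) (if [exists l, k l == j] then 0 else f 0 j)
  + \sum_(i < nt) f 0 (k i) *: U i.

(* Main.v *)
Require Import Defs.
From HB Require Import structures.
From mathcomp Require Import all_boot all_order all_algebra.
From mathcomp Require Import reals.
From Stdlib Require Import Classical.
Import Order.TTheory GRing.Theory Num.Theory.
Local Open Scope ring_scope.

Section Aux.
Variables (R : realType) (n : nat).

Lemma lf_sumx (I : finType) (c : 'rV[R]_n) (F : I -> 'rV[R]_n) :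
  lf c (\sum_l F l) = \sum_l lf c (F l).
Proof.
rewrite /lf; under eq_bigr do rewrite summxE mulr_sumr.
by rewrite exchange_big.
Qed.

Lemma lf_sumc (I : finType) (x : 'rV[R]_n) (F : I -> 'rV[R]_n) :
  lf (\sum_l F l) x = \sum_l lf (F l) x.
Proof.
rewrite /lf; under eq_bigr do rewrite summxE mulr_suml.
by rewrite exchange_big.
Qed.

Lemma lfD (c1 c2 x : 'rV[R]_n) : lf (c1 + c2) x = lf c1 x + lf c2 x.
Proof. by rewrite /lf -big_split; apply: eq_bigr => j _; rewrite mxE mulrDl. Qed.

Lemma lfZ a (c x : 'rV[R]_n) : lf (a *: c) x = a * lf c x.
Proof. by rewrite /lf mulr_sumr; apply: eq_bigr => j _; rewrite mxE mulrA. Qed.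

Lemma lf0x (c : 'rV[R]_n) : lf c 0 = 0.
Proof. by rewrite /lf big1 // => j _; rewrite mxE mulr0. Qed.

Lemma subst_eq (nt : nat) (k : 'I_nt -> 'I_n) (U : 'I_nt -> 'rV[R]_n)
  (f x : 'rV[R]_n) : injective k ->
  (forall i, x 0 (k i) = lf (U i) x) -> lf (subst_gj k U f) x = lf f x.
Proof.
move=> kinj hx; rewrite /subst_gj lfD lf_sumc.
under [X in _ + X = _]eq_bigr do rewrite lfZ -hx.
rewrite -(big_imset (fun j => f 0 j * x 0 j) (in2W kinj)) /=.
rewrite [RHS](bigID (fun j => j \in k @: setT)) /= addrC /lf; congr (_ + _).
  rewrite [LHS](bigID (fun j => j \in k @: setT)) /= big1 ?add0r.
    apply: eq_bigr => j Hj; rewrite mxE.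
    have -> : [exists l, k l == j] = false.
      apply/negbTE/existsP => -[l /eqP kl]; move: Hj; rewrite -kl imset_f //.
    by [].
  move=> j /imsetP [l _ ->]; rewrite mxE.
  have -> : [exists l0, k l0 == k l] by apply/existsP; exists l.
  by rewrite mul0r.
apply: eq_bigl => j.
apply/imsetP/imsetP => -[z _ ->]; by exists z.
Qed.

Lemma exists_x0 (m : nat) (f : 'I_m -> 'rV[R]_n) :
  exists x0, is_solution (fun g => exists i, g = f i) x0 /\
    forall l, ~ implied_eq (fun g => exists i, g = f i) (f l) ->
      0 < lf (f l) x0.
Proof.
set S := fun g => exists i, g = f i.
have sol0 : is_solution S 0 by move=> g _; rewrite lf0x.
have solD : forall x y, is_solution S x -> is_solution S y ->
    is_solution S (x + y).
  move=> x y hx hy g Sg; rewrite /lf.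
  under eq_bigr do rewrite mxE mulrDr.
  by rewrite big_split /=; apply: addr_ge0; [apply: hx|apply: hy].
have H : forall l : 'I_m, exists x, is_solution S x /\
    (~ implied_eq S (f l) -> 0 < lf (f l) x).
  move=> l; case: (classic (implied_eq S (f l))) => Hl.
    by exists 0; split => // /(_ Hl).
  have [x Hx] := not_all_ex_not _ _ Hl.
  have [sx nx] := imply_to_and _ _ Hx.
  exists x; split => // _; rewrite lt_def; apply/andP; split.
    by apply/eqP.

  by apply: sx; exists l.
have [X HX] := fin_all_exists H.
exists (\sum_l X l); split.
  elim/big_ind: _ => //; move=> l _; exact: (HX l).1.
move=> l nl; rewrite lf_sumx (bigD1 l) //=.
apply: (lt_le_trans ((HX l).2 nl)); rewrite lerDl.
by apply: sumr_ge0 => i _; apply: (HX i).1; exists l.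
Qed.

End Aux.

Theorem theorem5 (R : realType) (n m : nat) (f : 'I_m -> 'rV[R]_n)
  (hf : forall i, f i != 0)
  (nt : nat) (k : 'I_nt -> 'I_n) (U : 'I_nt -> 'rV[R]_n) :
  let Sf := fun g : 'rV[R]_n => exists i, g = f i in
  let I := fun i : 'I_m => implied_eq Sf (f i) in
  let E := fun e : 'rV[R]_n => exists i, I i /\ e = f i in
  is_gj_form E k U ->
  let Rf := fun g : 'rV[R]_n =>
    exists j, ~ I j /\ g = subst_gj k U (f j) /\ g != 0 in
  pure Rf.
Proof.
move=> Sf I E [hk hU hE] Rf g [j [nIj [-> _]]] himp.
have kinj : injective k.
  move=> a b hab; apply/eqP; case: (ltngtP a b) => hlt.
  - by move: (hk _ _ hlt); rewrite hab ltnn.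
  - by move: (hk _ _ hlt); rewrite hab ltnn.
  - by apply/eqP/val_inj.
have [x0 [sx0 px0]] := @exists_x0 R n m f.
have L : forall e, E e -> lf e x0 = 0.
  by move=> e [i [Ii ->]]; apply: Ii.
have piv := (hE x0).1 L.
have : lf (subst_gj k U (f j)) x0 = 0.
  apply: himp => g' [l [nl [-> _]]].
  by rewrite subst_eq //; apply: ltW; apply: px0.
rewrite subst_eq // => h0.
by move: (px0 j nIj); rewrite h0 ltxx.
Qed.
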